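(* Let $\Gamma$ be the group generated by the super-Apollonian group $\mathcal A^S$, the $4\times4$ permutation matrices, and $\pm I$, and let $\tilde\Gamma=\langle\Gamma,D\rangle$ with $D=\frac12\begin{pmatrix}-1&1&1&1\\1&-1&1&1\\1&1&-1&1\\1&1&1&-1\end{pmatrix}$. Then $\tilde\Gamma=J_0\,O(3,1;\mathbb Z)\,J_0^{-1}$, where $J_0=\frac12\begin{pmatrix}1&1&1&1\\1&1&-1&-1\\1&-1&1&-1\\1&-1&-1&1\end{pmatrix}$.
   Context: Let $S_i$ ($i=1,\dots,4$) be the $4\times4$ integer matrix equal to the identity except that row $i$ has $-1$ in position $i$ and $2$ in the other three positions, and $S_i^\perp=S_i^T$; the super-Apollonian group is $\mathcal A^S=\langle S_1,\dots,S_4,S_1^\perp,\dots,S_4^\perp\rangle$. Let $Q_L=\mathrm{diag}(-1,1,1,1)$ and $O(3,1;\mathbb Z)=\{U\in M_4(\mathbb Z):U^TQ_LU=Q_L\}$. *)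

(* Defs.v *)
From HB Require Import structures.
From mathcomp Require Import all_boot all_order all_fingroup all_algebra.
Set Implicit Arguments. Unset Strict Implicit. Unset Printing Implicit Defensive.
Import Order.TTheory GRing.Theory Num.Theory.
Local Open Scope ring_scope.

Inductive genby (P : 'M[rat]_4 -> Prop) : 'M[rat]_4 -> Prop :=
  | genby_base M : P M -> genby P M
  | genby_one : genby P 1%:M
  | genby_mul M N : genby P M -> genby P N -> genby P (M *m N)
  | genby_inv M : genby P M -> genby P (invmx M).

Definition Smat (i : 'I_4) : 'M[rat]_4 :=
  \matrix_(r, c) (if r == i then (if c == i then -1 else 2) else (r == c)%:R).

(* generators of the super-Apollonian group: S_i and S_i^perp = S_i^T *)
Definition AS_gen (M : 'M[rat]_4) : Prop :=
  exists i : 'I_4, M = Smat i \/ M = (Smat i)^T.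

Definition superApollonian : 'M[rat]_4 -> Prop := genby AS_gen.

Definition Gamma : 'M[rat]_4 -> Prop :=
  genby (fun M => superApollonian M \/ (exists s : 'S_4, M = perm_mx s)
                  \/ M = 1%:M \/ M = - 1%:M).

Definition Dmat : 'M[rat]_4 :=
  \matrix_(r, c) (if r == c then - (1/2) else 1/2).

Definition GammaTilde : 'M[rat]_4 -> Prop :=
  genby (fun M => Gamma M \/ M = Dmat).

Definition J0 : 'M[rat]_4 :=
  (1/2) *: \matrix_(r, c)
    (nth 0 (nth [::] [:: [:: 1; 1; 1; 1]; [:: 1; 1; -1; -1];
                         [:: 1; -1; 1; -1]; [:: 1; -1; -1; 1]] r) c).

Definition QL : 'M[int]_4 :=
  \matrix_(r, c) (if r == c then (if r == 0 :> nat then -1 else 1) else 0).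

Definition O31Z (U : 'M[int]_4) : bool := U^T *m QL *m U == QL.

(* Main.v *)
Require Import Defs.
From HB Require Import structures.
From mathcomp Require Import all_boot all_order all_fingroup all_algebra.
From mathcomp Require Import zify ring lra.
Set Implicit Arguments. Unset Strict Implicit. Unset Printing Implicit Defensive.
Import Order.TTheory GRing.Theory Num.Theory.
Local Open Scope ring_scope.


Section L.
Variable R : nzRingType.
Definition mxl (l : seq (seq R)) : 'M[R]_4 := \matrix_(i, j) nth 0 (nth [::] l i) j.
Definition lent (a : seq (seq R)) i j := nth 0 (nth [::] a i) j.
Definition lmul (a b : seq (seq R)) : seq (seq R) :=
  [seq [seq lent a i 0 * lent b 0 j + lent a i 1 * lent b 1 j
           + lent a i 2 * lent b 2 j + lent a i 3 * lent b 3 j | j <- iota 0 4] | i <- iota 0 4].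
Definition ltr (a : seq (seq R)) : seq (seq R) :=
  [seq [seq lent a j i | j <- iota 0 4] | i <- iota 0 4].

Lemma mxlM a b : mxl a *m mxl b = mxl (lmul a b).
Proof.
apply/matrixP => i j; rewrite !mxE !big_ord_recr big_ord0 /= !mxE add0r.
by rewrite (nth_map 0%N) ?size_iota // (nth_map 0%N) ?size_iota ?nth_iota.
Qed.

Lemma mxlT a : (mxl a)^T = mxl (ltr a).
Proof.
apply/matrixP => i j; rewrite !mxE.
by rewrite (nth_map 0%N) ?size_iota // (nth_map 0%N) ?size_iota ?nth_iota // nth_iota.
Qed.
End L.

Lemma mxl_map (a : seq (seq int)) : map_mx intr (mxl a) = mxl [seq [seq (x%:~R : rat) | x <- r] | r <- a].
Proof.
apply/matrixP => i j; rewrite !mxE.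
case: (ltnP i (size a)) => hi; last first.
  by rewrite (nth_default [::] hi) nth_nil (nth_default [::]) ?size_map // nth_nil.
rewrite (nth_map [::]) //.
case: (ltnP j (size (nth [::] a i))) => hj; last first.
  rewrite (nth_default 0 hj) (nth_default 0) ?size_map //.
by rewrite (nth_map 0).
Qed.

Definition J0l : seq (seq rat) := [:: [:: 1/2; 1/2; 1/2; 1/2]; [:: 1/2; 1/2; -1/2; -1/2];
   [:: 1/2; -1/2; 1/2; -1/2]; [:: 1/2; -1/2; -1/2; 1/2]].

Ltac entries := apply/matrixP; case=> [[|[|[|[|//]]]] ?]; case=> [[|[|[|[|//]]]] ?];
  rewrite !mxE ?permE; apply/eqP; vm_compute; reflexivity.

Lemma J0E : J0 = mxl J0l.
Proof. entries. Qed.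

Definition Il : seq (seq int) := [:: [:: 1; 0; 0; 0]; [:: 0; 1; 0; 0]; [:: 0; 0; 1; 0]; [:: 0; 0; 0; 1]].
Definition mIl : seq (seq int) := [:: [:: -1; 0; 0; 0]; [:: 0; -1; 0; 0]; [:: 0; 0; -1; 0]; [:: 0; 0; 0; -1]].
Definition QLl : seq (seq int) := [:: [:: -1; 0; 0; 0]; [:: 0; 1; 0; 0]; [:: 0; 0; 1; 0]; [:: 0; 0; 0; 1]].
Definition Dyl : seq (seq int) := [:: [:: 1; 0; 0; 0]; [:: 0; -1; 0; 0]; [:: 0; 0; -1; 0]; [:: 0; 0; 0; -1]].
Definition tpl (x y : nat) : seq (seq int) :=
  match x, y with
  | 0, 1 | 1, 0 => [:: [:: 1; 0; 0; 0]; [:: 0; 1; 0; 0]; [:: 0; 0; 0; (-1)]; [:: 0; 0; (-1); 0]]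
  | 0, 2 | 2, 0 => [:: [:: 1; 0; 0; 0]; [:: 0; 0; 0; (-1)]; [:: 0; 0; 1; 0]; [:: 0; (-1); 0; 0]]
  | 0, 3 | 3, 0 => [:: [:: 1; 0; 0; 0]; [:: 0; 0; (-1); 0]; [:: 0; (-1); 0; 0]; [:: 0; 0; 0; 1]]
  | 1, 2 | 2, 1 => [:: [:: 1; 0; 0; 0]; [:: 0; 0; 1; 0]; [:: 0; 1; 0; 0]; [:: 0; 0; 0; 1]]
  | 1, 3 | 3, 1 => [:: [:: 1; 0; 0; 0]; [:: 0; 0; 0; 1]; [:: 0; 0; 1; 0]; [:: 0; 1; 0; 0]]
  | 2, 3 | 3, 2 => [:: [:: 1; 0; 0; 0]; [:: 0; 1; 0; 0]; [:: 0; 0; 0; 1]; [:: 0; 0; 1; 0]]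
  | _, _ => Il
  end.
Definition Sl (i : nat) : seq (seq int) :=
  match i with
  | 0 => [:: [:: 2; (-1); (-1); (-1)]; [:: 1; 0; (-1); (-1)]; [:: 1; (-1); 0; (-1)]; [:: 1; (-1); (-1); 0]]
  | 1 => [:: [:: 2; (-1); 1; 1]; [:: 1; 0; 1; 1]; [:: (-1); 1; 0; (-1)]; [:: (-1); 1; (-1); 0]]
  | 2 => [:: [:: 2; 1; (-1); 1]; [:: (-1); 0; 1; (-1)]; [:: 1; 1; 0; 1]; [:: (-1); (-1); 1; 0]]
  | _ => [:: [:: 2; 1; 1; (-1)]; [:: (-1); 0; (-1); 1]; [:: (-1); (-1); 0; 1]; [:: 1; 1; 1; 0]]
  end.
Definition STl (i : nat) : seq (seq int) :=
  match i with
  | 0 => [:: [:: 2; 1; 1; 1]; [:: (-1); 0; (-1); (-1)]; [:: (-1); (-1); 0; (-1)]; [:: (-1); (-1); (-1); 0]]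
  | 1 => [:: [:: 2; 1; (-1); (-1)]; [:: (-1); 0; 1; 1]; [:: 1; 1; 0; (-1)]; [:: 1; 1; (-1); 0]]
  | 2 => [:: [:: 2; (-1); 1; (-1)]; [:: 1; 0; 1; (-1)]; [:: (-1); 1; 0; 1]; [:: 1; (-1); 1; 0]]
  | _ => [:: [:: 2; (-1); (-1); 1]; [:: 1; 0; (-1); 1]; [:: 1; (-1); 0; 1]; [:: (-1); 1; 1; 0]]
  end.

Definition cj (U : 'M[int]_4) : 'M[rat]_4 := J0 *m map_mx intr U *m J0.

Lemma QLE : QL = mxl QLl.
Proof. entries. Qed.

Ltac conc := rewrite /cj J0E mxl_map !mxlM; entries.
Ltac ochk := rewrite /O31Z mxlT QLE !mxlM; apply/eqP; congr mxl; vm_compute; reflexivity.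

Lemma cj_S (i : 'I_4) : Smat i = cj (mxl (Sl i)) /\ O31Z (mxl (Sl i)).
Proof. case: i => [[|[|[|[|//]]]] ?]; split; try ochk; conc. Qed.

Lemma cj_ST (i : 'I_4) : (Smat i)^T = cj (mxl (STl i)) /\ O31Z (mxl (STl i)).
Proof. case: i => [[|[|[|[|//]]]] ?]; split; try ochk; conc. Qed.

Lemma cj_tp (x y : 'I_4) : perm_mx (tperm x y) = cj (mxl (tpl x y)) /\ O31Z (mxl (tpl x y)).
Proof.
case: x => [[|[|[|[|//]]]] ?]; case: y => [[|[|[|[|//]]]] ?]; split; try ochk;
 rewrite /perm_mx; conc.
Qed.


Lemma J0J0 : J0 *m J0 = 1%:M.
Proof. rewrite J0E mxlM; entries. Qed.

Lemma J0T : J0^T = J0.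
Proof. by rewrite J0E mxlT; congr mxl; apply/eqP; vm_compute. Qed.

Lemma inv_uniq (A B : 'M[rat]_4) : A *m B = 1%:M -> invmx A = B.
Proof.
move=> AB; have [uA _] := mulmx1_unit AB.
by rewrite -[invmx A]mulmx1 -AB mulmxA mulVmx // mul1mx.
Qed.

Lemma invJ0 : invmx J0 = J0.
Proof. exact: inv_uniq J0J0. Qed.

Lemma cjM U V : cj (U *m V) = cj U *m cj V.
Proof.
rewrite /cj map_mxM.
by rewrite !mulmxA -(mulmxA _ J0 J0) J0J0 mulmx1.
Qed.

Lemma cj1 : cj 1%:M = 1%:M.
Proof. by rewrite /cj map_mx1 mulmx1 J0J0. Qed.

Lemma cjT U : (cj U)^T = cj U^T.
Proof. by rewrite /cj !trmx_mul J0T map_trmx mulmxA. Qed.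

Lemma QLQL : QL *m QL = 1%:M.
Proof. rewrite QLE mxlM; entries. Qed.

Lemma QLT : QL^T = QL.
Proof. by rewrite QLE mxlT; congr mxl; vm_compute. Qed.

Lemma O1 : O31Z 1%:M.
Proof. by rewrite /O31Z trmx1 mul1mx mulmx1. Qed.

Lemma OQL : O31Z QL.
Proof. by rewrite /O31Z QLT QLQL mul1mx. Qed.

Lemma OM U V : O31Z U -> O31Z V -> O31Z (U *m V).
Proof.
rewrite /O31Z => /eqP hU /eqP hV; apply/eqP.
have -> : (U *m V)^T *m QL *m (U *m V) = V^T *m (U^T *m QL *m U) *m V.
  by rewrite trmx_mul !mulmxA.
by rewrite hU.
Qed.

Lemma OT U : O31Z U -> O31Z U^T.
Proof.
rewrite /O31Z => /eqP hU; apply/eqP.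
have h1 : (QL *m U^T *m QL) *m U = 1%:M by rewrite -!mulmxA (mulmxA U^T) hU QLQL.
have h2 := mulmx1C h1.
rewrite trmxK.
have -> : U *m QL *m U^T = U *m (QL *m U^T *m QL) *m QL by rewrite -!mulmxA QLQL mulmx1.
by rewrite h2 mul1mx.
Qed.

Definition G (M : 'M[rat]_4) := exists U, O31Z U /\ M = cj U.

Lemma G1 : G 1%:M.
Proof. by exists 1%:M; rewrite cj1; split => //; apply: O1. Qed.

Lemma GM A B : G A -> G B -> G (A *m B).
Proof. by move=> [U [hU ->]] [V [hV ->]]; exists (U *m V); rewrite cjM; split => //; apply: OM. Qed.

Lemma GV A : G A -> G (invmx A).
Proof.
move=> [U [hU ->]]; exists (QL *m U^T *m QL); split.
  by apply: OM; [apply: OM; [apply: OQL | apply: OT] | apply: OQL].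
apply: inv_uniq; rewrite -cjM.
move/eqP: (OT hU); rewrite trmxK => h.
by rewrite !mulmxA h QLQL cj1.
Qed.

Lemma GT A : G A -> G A^T.
Proof. by move=> [U [hU ->]]; exists U^T; rewrite cjT; split => //; apply: OT. Qed.

Lemma G_genby (Pr : 'M[rat]_4 -> Prop) : (forall M, Pr M -> G M) -> forall M, genby Pr M -> G M.
Proof.
move=> hP M; elim => {M} [M /hP //| | M N _ hM _ hN | M _ hM].
- exact: G1.
- exact: GM.
- exact: GV.
Qed.

Lemma cj_m1 : - 1%:M = cj (mxl mIl) /\ O31Z (mxl mIl).
Proof. split; [conc | ochk]. Qed.

Lemma cj_D : Dmat = cj (mxl Dyl) /\ O31Z (mxl Dyl).
Proof. split; [conc | ochk]. Qed.

Lemma G_perm (s : 'S_4) : G (perm_mx s).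
Proof.
have [ts -> _] := prod_tpermP s.
elim: ts => [|t ts IH]; first by rewrite big_nil perm_mx1; apply: G1.
rewrite big_cons perm_mxM; apply: GM => //.
by have [h1 h2] := cj_tp t.1 t.2; exists (mxl (tpl t.1 t.2)).
Qed.

Lemma fwd M : GammaTilde M -> G M.
Proof.
apply: G_genby => {}M [|->]; last by have [h1 h2] := cj_D; exists (mxl Dyl).
apply: G_genby => {}M [|[[s ->]|[->|->]]].
- apply: G_genby => {}M [i [->|->]].
    by have [h1 h2] := cj_S i; exists (mxl (Sl i)).
  by have [h1 h2] := cj_ST i; exists (mxl (STl i)).
- exact: G_perm.
- exact: G1.
- by have [h1 h2] := cj_m1; exists (mxl mIl).
Qed.


Definition P (U : 'M[int]_4) := GammaTilde (cj U).

Lemma PM U V : P U -> P V -> P (U *m V).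
Proof. by rewrite /P cjM; apply: genby_mul. Qed.

Lemma P1 : P 1%:M.
Proof. by rewrite /P cj1; apply: genby_one. Qed.

Lemma Ptr W U : P W -> W *m W = 1%:M -> P (W *m U) -> P U.
Proof. by move=> hW hWW hWU; rewrite -[U]mul1mx -hWW -mulmxA; apply: PM. Qed.

Lemma GT_G M : Gamma M -> GammaTilde M.
Proof. by move=> h; apply: genby_base; left. Qed.
Lemma G_base M : (superApollonian M \/ (exists s : 'S_4, M = perm_mx s) \/ M = 1%:M \/ M = - 1%:M) -> Gamma M.
Proof. by move=> h; apply: genby_base. Qed.

Lemma P_S0 : P (mxl (Sl 0)).
Proof.
rewrite /P -(cj_S 0).1; apply/GT_G/G_base; left; apply: genby_base.
by exists 0; left.
Qed.

Lemma P_D : P (mxl Dyl).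
Proof. by rewrite /P -cj_D.1; apply: genby_base; right. Qed.

Lemma P_m1 : P (mxl mIl).
Proof. by rewrite /P -cj_m1.1; apply/GT_G/G_base; right; right; right. Qed.

Lemma P_tp (x y : 'I_4) : P (mxl (tpl x y)).
Proof. by rewrite /P -(cj_tp x y).1; apply/GT_G/G_base; right; left; exists (tperm x y). Qed.

Definition o0 : 'I_4 := @Ordinal 4 0 isT.
Definition o1 : 'I_4 := @Ordinal 4 1 isT.
Definition o2 : 'I_4 := @Ordinal 4 2 isT.
Definition o3 : 'I_4 := @Ordinal 4 3 isT.

Lemma sum4 (F : 'I_4 -> int) : \sum_(k < 4) F k = F o0 + F o1 + F o2 + F o3.
Proof.
rewrite !big_ord_recr big_ord0 /= add0r.
by congr (_ + _ + _ + _); congr F; apply: val_inj.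
Qed.

Lemma Oeq U : O31Z U -> forall i j,
  -(U o0 i * U o0 j) + U o1 i * U o1 j + U o2 i * U o2 j + U o3 i * U o3 j = QL i j.
Proof.
rewrite /O31Z => /eqP h i j; have -> : QL i j = (U^T *m QL *m U) i j by rewrite h.
rewrite !mxE sum4 !mxE !sum4 /QL !mxE /=.
ring.
Qed.

Definition Fk (k : 'I_4) : 'M[int]_4 := @diag_mx int 4 (\row_(i < 4) (if i == k then -1 else 1 : int)).

Lemma Fk_ent k (U : 'M[int]_4) i j : (Fk k *m U) i j = (if i == k then -1 else 1) * U i j.
Proof. by rewrite mul_diag_mx !mxE. Qed.

Lemma perm_ent (s : 'S_4) (U : 'M[int]_4) i j : (perm_mx s *m U) i j = U (s i) j.
Proof. by rewrite -row_permE mxE. Qed.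

Lemma m1E : mxl mIl = - 1%:M.
Proof. entries. Qed.

Lemma m1_ent (U : 'M[int]_4) i j : (mxl mIl *m U) i j = - U i j.
Proof. by rewrite m1E mulNmx mul1mx mxE. Qed.

Lemma R_ent (U : 'M[int]_4) : (mxl (Sl 0) *m U) o0 o0 = 2 * U o0 o0 - U o1 o0 - U o2 o0 - U o3 o0.
Proof. rewrite !mxE sum4 !mxE /=; ring. Qed.

Lemma m1_facts : P (mxl mIl) /\ mxl mIl *m mxl mIl = 1%:M /\ O31Z (mxl mIl).
Proof. split; first exact: P_m1. by split; [rewrite m1E mulNmx mulmxN opprK mul1mx | exact: cj_m1.2]. Qed.

Lemma R_facts : P (mxl (Sl 0)) /\ mxl (Sl 0) *m mxl (Sl 0) = 1%:M /\ O31Z (mxl (Sl 0)).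
Proof. split; first exact: P_S0. split; last exact: (cj_S 0).2. rewrite mxlM; entries. Qed.

Definition F0l : seq (seq int) := [:: [:: -1; 0; 0; 0]; [:: 0; 1; 0; 0]; [:: 0; 0; 1; 0]; [:: 0; 0; 0; 1]].
Definition F1l : seq (seq int) := [:: [:: 1; 0; 0; 0]; [:: 0; -1; 0; 0]; [:: 0; 0; 1; 0]; [:: 0; 0; 0; 1]].
Definition F2l : seq (seq int) := [:: [:: 1; 0; 0; 0]; [:: 0; 1; 0; 0]; [:: 0; 0; -1; 0]; [:: 0; 0; 0; 1]].
Definition F3l : seq (seq int) := [:: [:: 1; 0; 0; 0]; [:: 0; 1; 0; 0]; [:: 0; 0; 1; 0]; [:: 0; 0; 0; -1]].

Lemma Fk_facts k : P (Fk k) /\ Fk k *m Fk k = 1%:M /\ O31Z (Fk k).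
Proof.
case: k => [[|[|[|[|//]]]] i].
- have -> : Fk (Ordinal i) = mxl mIl *m mxl Dyl by rewrite mxlM; entries.
  split; first by apply: PM; [exact: P_m1 | exact: P_D].
  rewrite !mxlM; split; [entries | ochk].
- have -> : Fk (Ordinal i) = mxl Dyl *m mxl (tpl 2 3) *m mxl (tpl 0 1) by rewrite !mxlM; entries.
  split; first by apply: PM; [apply: PM; [exact: P_D | exact: (P_tp o2 o3)] | exact: (P_tp o0 o1)].
  rewrite !mxlM; split; [entries | ochk].
- have -> : Fk (Ordinal i) = mxl (tpl 1 2) *m (mxl Dyl *m mxl (tpl 2 3) *m mxl (tpl 0 1)) *m mxl (tpl 1 2)
    by rewrite !mxlM; entries.
  split; first by repeat apply: PM; solve [exact: P_D | exact: (P_tp o2 o3) | exact: (P_tp o0 o1) | exact: (P_tp o1 o2)].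
  rewrite !mxlM; split; [entries | ochk].
- have -> : Fk (Ordinal i) = mxl (tpl 1 3) *m (mxl Dyl *m mxl (tpl 2 3) *m mxl (tpl 0 1)) *m mxl (tpl 1 3)
    by rewrite !mxlM; entries.
  split; first by repeat apply: PM; solve [exact: P_D | exact: (P_tp o2 o3) | exact: (P_tp o0 o1) | exact: (P_tp o1 o3)].
  rewrite !mxlM; split; [entries | ochk].
Qed.

Definition Sw (x y : 'I_4) : 'M[int]_4 := perm_mx (tperm x y).

Lemma Sw_facts (x y : 'I_4) : x != o0 -> y != o0 ->
  P (Sw x y) /\ Sw x y *m Sw x y = 1%:M /\ O31Z (Sw x y).
Proof.
move=> hx hy.
have E : Sw x y = mxl (tpl x y).
  move: hx hy; case: x => [[|[|[|[|//]]]] ?] //; case: y => [[|[|[|[|//]]]] ?] // _ _;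
    rewrite /Sw /perm_mx; entries.
split; last split.
- by rewrite E; apply: P_tp.
- by rewrite /Sw -perm_mxM tperm2 perm_mx1.
- by rewrite E; have := (cj_tp x y).2.
Qed.

Lemma Sw_ent x y (U : 'M[int]_4) i j : (Sw x y *m U) i j = U (tperm x y i) j.
Proof. exact: perm_ent. Qed.

Lemma ord4 (i : 'I_4) : i = o0 \/ i = o1 \/ i = o2 \/ i = o3.
Proof.
case: i => [[|[|[|[|//]]]] p]; [left | right; left | right; right; left | right; right; right];
  exact: val_inj.
Qed.

Lemma Pflip k U : P (Fk k *m U) -> P U.
Proof. by have [h1 [h2 _]] := Fk_facts k; apply: Ptr. Qed.
Lemma Oflip k U : O31Z U -> O31Z (Fk k *m U).
Proof. by have [_ [_ h]] := Fk_facts k; apply: OM. Qed.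
Lemma Pswap x y U : x != o0 -> y != o0 -> P (Sw x y *m U) -> P U.
Proof. by move=> hx hy; have [h1 [h2 _]] := Sw_facts hx hy; apply: Ptr. Qed.
Lemma Oswap x y U : x != o0 -> y != o0 -> O31Z U -> O31Z (Sw x y *m U).
Proof. by move=> hx hy; have [_ [_ h]] := Sw_facts hx hy; apply: OM. Qed.



Ltac oq hU i j e := move: (Oeq hU i j); rewrite /QL mxE /= => e.

Lemma St3 U : O31Z U -> U o0 o0 = 1 -> U o1 o1 = 1 -> U o2 o2 = 1 -> U o3 o3 = 1 -> P U.
Proof.
move=> hU h0 h1 h2 h3.
oq hU o0 o0 e00. oq hU o0 o1 e01. oq hU o0 o2 e02. oq hU o0 o3 e03.
oq hU o1 o1 e11. oq hU o2 o2 e22. oq hU o3 o3 e33.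
rewrite ?h0 ?h1 ?h2 ?h3 in e00 e01 e02 e03 e11 e22 e33.
have [z10 [z20 z30]] : U o1 o0 = 0 /\ U o2 o0 = 0 /\ U o3 o0 = 0 by clear -e00; nia.
rewrite ?z10 ?z20 ?z30 in e01 e02 e03.
have [z01 [z02 z03]] : U o0 o1 = 0 /\ U o0 o2 = 0 /\ U o0 o3 = 0 by clear -e01 e02 e03; lia.
rewrite ?z01 ?z02 ?z03 in e11 e22 e33.
have [z21 z31] : U o2 o1 = 0 /\ U o3 o1 = 0 by clear -e11; nia.
have [z12 z32] : U o1 o2 = 0 /\ U o3 o2 = 0 by clear -e22; nia.
have [z13 z23] : U o1 o3 = 0 /\ U o2 o3 = 0 by clear -e33; nia.
suff -> : U = 1%:M by apply: P1.
apply/matrixP => i j; rewrite mxE.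
by have [->|[->|[->|->]]] := ord4 i; have [->|[->|[->|->]]] := ord4 j.
Qed.

Lemma unit3 (x y z : int) : x*x + y*y + z*z = 1 ->
  (x = 1 \/ x = -1) /\ y = 0 /\ z = 0 \/ x = 0 /\ (y = 1 \/ y = -1) /\ z = 0 \/ x = 0 /\ y = 0 /\ (z = 1 \/ z = -1).
Proof. move=> h; nia. Qed.
Lemma unit2 (y z : int) : y*y + z*z = 1 -> (y = 1 \/ y = -1) /\ z = 0 \/ y = 0 /\ (z = 1 \/ z = -1).
Proof. move=> h; nia. Qed.

Ltac ent := rewrite ?Fk_ent ?Sw_ent ?m1_ent /= ?permE /=.

Lemma St2 U : O31Z U -> U o0 o0 = 1 -> U o1 o1 = 1 -> U o2 o2 = 1 -> P U.
Proof.
move=> hU h0 h1 h2.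
oq hU o0 o0 e00. oq hU o0 o1 e01. oq hU o0 o2 e02. oq hU o0 o3 e03.
oq hU o1 o1 e11. oq hU o2 o2 e22. oq hU o3 o3 e33. oq hU o1 o3 e13. oq hU o2 o3 e23.
rewrite ?h0 ?h1 ?h2 in e00 e01 e02 e03 e11 e22 e33 e13 e23.
have [z10 [z20 z30]] : U o1 o0 = 0 /\ U o2 o0 = 0 /\ U o3 o0 = 0 by clear -e00; nia.
rewrite ?z10 ?z20 ?z30 in e01 e02 e03.
have [z01 [z02 z03]] : U o0 o1 = 0 /\ U o0 o2 = 0 /\ U o0 o3 = 0 by clear -e01 e02 e03; lia.
rewrite ?z01 ?z02 ?z03 in e11 e22 e33 e13 e23.
have [z21 z31] : U o2 o1 = 0 /\ U o3 o1 = 0 by clear -e11; nia.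
have [z12 z32] : U o1 o2 = 0 /\ U o3 o2 = 0 by clear -e22; nia.
rewrite ?z21 ?z31 ?z12 ?z32 in e13 e23.
have z13 : U o1 o3 = 0 by clear -e13; lia.
have z23 : U o2 o3 = 0 by clear -e23; lia.
rewrite ?z13 ?z23 in e33.
have [h3|h3] : U o3 o3 = 1 \/ U o3 o3 = -1 by clear -e33; nia.
  exact: St3.
apply: (@Pflip o3); apply: St3; first exact: Oflip.
all: by ent; rewrite ?h0 ?h1 ?h2 ?h3.
Qed.

Lemma St1 U : O31Z U -> U o0 o0 = 1 -> U o1 o1 = 1 -> P U.
Proof.
move=> hU h0 h1.
oq hU o0 o0 e00. oq hU o0 o1 e01. oq hU o0 o2 e02. oq hU o0 o3 e03.
oq hU o1 o1 e11. oq hU o2 o2 e22. oq hU o1 o2 e12.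
rewrite ?h0 ?h1 in e00 e01 e02 e03 e11 e22 e12.
have [z10 [z20 z30]] : U o1 o0 = 0 /\ U o2 o0 = 0 /\ U o3 o0 = 0 by clear -e00; nia.
rewrite ?z10 ?z20 ?z30 in e01 e02 e03.
have [z01 [z02 z03]] : U o0 o1 = 0 /\ U o0 o2 = 0 /\ U o0 o3 = 0 by clear -e01 e02 e03; lia.
rewrite ?z01 ?z02 ?z03 in e11 e22 e12.
have [z21 z31] : U o2 o1 = 0 /\ U o3 o1 = 0 by clear -e11; nia.
rewrite ?z21 ?z31 in e12.
have z12 : U o1 o2 = 0 by clear -e12; lia.
rewrite ?z12 in e22.
have : U o2 o2 * U o2 o2 + U o3 o2 * U o3 o2 = 1 by clear -e22; lia.
move/unit2 => [[[h2|h2] _]|[_ [h2|h2]]].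
- exact: St2.
- apply: (@Pflip o2); apply: St2; first exact: Oflip.
  1-3: by ent; rewrite ?h0 ?h1 ?h2.
- apply: (@Pswap o2 o3) => //; apply: St2; first exact: Oswap.
  1-3: by ent; rewrite ?h0 ?h1 ?h2.
- apply: (@Pswap o2 o3) => //; apply: (@Pflip o2); apply: St2; first by apply: Oflip; apply: Oswap.
  1-3: by ent; rewrite ?h0 ?h1 ?h2.
Qed.

Lemma St0 U : O31Z U -> U o0 o0 = 1 -> P U.
Proof.
move=> hU h0.
oq hU o0 o0 e00. oq hU o0 o1 e01. oq hU o0 o2 e02. oq hU o0 o3 e03.
oq hU o1 o1 e11.
rewrite ?h0 in e00 e01 e02 e03 e11.
have [z10 [z20 z30]] : U o1 o0 = 0 /\ U o2 o0 = 0 /\ U o3 o0 = 0 by clear -e00; nia.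
rewrite ?z10 ?z20 ?z30 in e01 e02 e03.
have [z01 [z02 z03]] : U o0 o1 = 0 /\ U o0 o2 = 0 /\ U o0 o3 = 0 by clear -e01 e02 e03; lia.
rewrite ?z01 in e11.
have : U o1 o1 * U o1 o1 + U o2 o1 * U o2 o1 + U o3 o1 * U o3 o1 = 1 by clear -e11; lia.
move/unit3 => [[[h1|h1] _]|[[_ [[h1|h1] _]]|[_ [_ [h1|h1]]]]].
- exact: St1.
- apply: (@Pflip o1); apply: St1; first exact: Oflip.
  1-2: by ent; rewrite ?h0 ?h1.
- apply: (@Pswap o1 o2) => //; apply: St1; first exact: Oswap.
  1-2: by ent; rewrite ?h0 ?h1.
- apply: (@Pswap o1 o2) => //; apply: (@Pflip o1); apply: St1; first by apply: Oflip; apply: Oswap.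
  1-2: by ent; rewrite ?h0 ?h1.
- apply: (@Pswap o1 o3) => //; apply: St1; first exact: Oswap.
  1-2: by ent; rewrite ?h0 ?h1.
- apply: (@Pswap o1 o3) => //; apply: (@Pflip o1); apply: St1; first by apply: Oflip; apply: Oswap.
  1-2: by ent; rewrite ?h0 ?h1.
Qed.


Lemma dec (A B C D : int) : 0 <= A -> 0 <= B -> 0 <= C -> 0 <= D -> -(A*A) + B*B + C*C + D*D = -1 -> 4 <= A * A ->
  (2*A - B - C - D) * (2*A - B - C - D) < A * A.
Proof.
move=> hA hB hC hD e h4.
have hA2 : 2 <= A by nia.
have lB : B < A by nia.
have lC : C < A by nia.
have lD : D < A by nia.
have hS : A < B + C + D.
  rewrite ltNge; apply/negP => hle.
  have h1 : (B + C + D) * (B + C + D) <= A * A by nia.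
  have hk : B * C + B * D + C * D = 0 by nia.
  have h2 : (A - (B + C + D)) * (A + (B + C + D)) = 1 by nia.
  nia.
nia.
Qed.

Lemma flip1 k U : O31Z U -> exists V, [/\ O31Z V, (P V -> P U), 0 <= V k o0,
  V k o0 * V k o0 = U k o0 * U k o0 & forall i, i != k -> V i o0 = U i o0].
Proof.
move=> hU; case: (lerP 0 (U k o0)) => h.
  by exists U; split.
exists (Fk k *m U); split.
- exact: Oflip.
- exact: Pflip.
- rewrite Fk_ent eqxx; lia.
- rewrite Fk_ent eqxx; ring.
- by move=> i /negbTE hi; rewrite Fk_ent hi mul1r.
Qed.

Lemma desc (n : nat) : forall U, O31Z U -> U o0 o0 * U o0 o0 <= n%:Z -> P U.
Proof.
elim: n => [|n IH] U hU hn; oq hU o0 o0 e00.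
  exfalso; clear -e00 hn; nia.
have [h1|[h1|h4]] : U o0 o0 = 1 \/ U o0 o0 = -1 \/ 4 <= U o0 o0 * U o0 o0 by clear -e00; nia.
- exact: St0.
- have [m1P [m1m1 m1O]] := m1_facts.
  apply: (Ptr m1P m1m1); apply: St0; first exact: OM.
  by rewrite m1_ent h1.
- have [V1 [O1 P1 p1 s1 r1]] := flip1 o0 hU.
  have [V2 [O2 P2 p2 s2 r2]] := flip1 o1 O1.
  have [V3 [O3 P3 p3 s3 r3]] := flip1 o2 O2.
  have [V4 [O4 P4 p4 s4 r4]] := flip1 o3 O3.
  have qA : V4 o0 o0 = V1 o0 o0 by rewrite r4 // r3 // r2.
  have qB : V4 o1 o0 = V2 o1 o0 by rewrite r4 // r3.
  have qC : V4 o2 o0 = V3 o2 o0 by rewrite r4.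
  have pA : 0 <= V4 o0 o0 by rewrite qA.
  have pB : 0 <= V4 o1 o0 by rewrite qB.
  have pC : 0 <= V4 o2 o0 by rewrite qC.
  have sA : V4 o0 o0 * V4 o0 o0 = U o0 o0 * U o0 o0 by rewrite qA.
  have [RP [RR RO]] := R_facts.
  apply: P1; apply: P2; apply: P3; apply: P4.
  apply: (Ptr RP RR); apply: IH; first exact: OM.
  rewrite R_ent.
  oq O4 o0 o0 f00.
  have := dec pA pB pC p4 f00; rewrite sA => /(_ h4) hlt.
  clear -hlt hn; lia.
Qed.

Lemma bwd U : O31Z U -> GammaTilde (cj U).
Proof.
move=> hU; have := @desc (absz (U o0 o0 * U o0 o0)) U hU; apply.
by rewrite abszE ler_norm.
Qed.

Theorem lemma7p5 (M : 'M[rat]_4) :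
  GammaTilde M <->
  exists U : 'M[int]_4, O31Z U /\ M = J0 *m map_mx intr U *m invmx J0.
Proof.
rewrite invJ0; split; first exact: fwd.
by move=> [U [hU ->]]; apply: bwd.
Qed.
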